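(* In the setting described in the context, let $\emptyset\subsetneq\mathcal A\subsetneq\mathcal C^*$ and $\mathcal S=\bigcup_{v\in\mathcal A}\mathcal U_v$. Suppose $y'_{\mathcal S}\ge\lfloor y_{\mathcal S}\rfloor$ and $x_{\mathcal S,\mathcal J}\le f(|\mathcal J|,y_{\mathcal S})$ for every $\mathcal J\subseteq\mathcal C$. Then $$\big(y'_{\mathcal S}-\lfloor y'_{\mathcal S}\rfloor\big)\big(\lceil y_{\mathcal S}\rceil-y_{\mathcal S}\big)\,d(\mathcal A,\mathcal C^*\setminus\mathcal A)\ \le\ \frac4u D_{\mathcal S}+\frac{4\ell+2}{u}D'_{\mathcal S}.$$
   Context: Setting: finite sets $\mathcal F$ (facility locations) and $\mathcal C$ (clients), a metric $d$ on $\mathcal F\cup\mathcal C$, positive integers $k,u,\ell$, and reals $x_{i,j}\ge0$, $y_i\ge0$ with $\sum_{i\in\mathcal F}x_{i,j}=1$ for all $j$, $\sum_iy_i\le k$, $x_{i,j}\le y_i$, $\sum_jx_{i,j}\le uy_i$. Notation: $y_{\mathcal B}=\sum_{i\in\mathcal B}y_i$, $x_{\mathcal B,j}=\sum_{i\in\mathcal B}x_{i,j}$, $x_{\mathcal B,\mathcal J}=\sum_{i\in\mathcal B,j\in\mathcal J}x_{i,j}$, $y'_{\mathcal B}=\frac1u\sum_{j\in\mathcal C}x_{\mathcal B,j}$; $d(\mathcal X,\mathcal Y)=\min_{a\in\mathcal X,b\in\mathcal Y}d(a,b)$; $d_{av}(j)=\sum_ix_{i,j}d(i,j)$; $D_i=\sum_jx_{i,j}d(i,j)$,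 $D'_i=\sum_jx_{i,j}d_{av}(j)$, $D_{\mathcal B}=\sum_{i\in\mathcal B}D_i$, $D'_{\mathcal B}=\sum_{i\in\mathcal B}D'_i$. The function $f:\mathbb Z_{\ge0}\times\mathbb R_{\ge0}\to\mathbb R$ is $f(p,q)=qu$ if $q\le\lfloor p/u\rfloor$; $u\lfloor p/u\rfloor+u(p/u-\lfloor p/u\rfloor)(q-\lfloor p/u\rfloor)$ if $\lfloor p/u\rfloor<q<\lceil p/u\rceil$; $p$ if $q\ge\lceil p/u\rceil$. Construction of $\mathcal C^*\subseteq\mathcal C$: start with $\mathcal C^*=\emptyset$, $R=\mathcal C$; while $R\ne\emptyset$, choose $v\in R$ with smallest $d_{av}(v)$, add it to $\mathcal C^*$, and remove from $R$ all $j\in R$ with $d(j,v)\le2\ell d_{av}(j)$. Each $i\in\mathcal F$ is put into $\mathcal U_v$ for one $v\in\mathcal C^*$ closest to $i$ (ties arbitrary). *)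

(* Defs.v *)
From mathcomp Require Import all_boot all_order all_algebra.
Set Implicit Arguments. Unset Strict Implicit. Unset Printing Implicit Defensive.
Import Order.TTheory GRing.Theory Num.Theory.
Local Open Scope ring_scope.

Section Defs.
Variables (R : archiRealFieldType) (Fac Cli : finType).

Definition is_metric (d : Fac + Cli -> Fac + Cli -> R) : Prop :=
  [/\ forall a b, 0 <= d a b,
      forall a b, d a b = 0 <-> a = b,
      forall a b, d a b = d b a &
      forall a b c, d a c <= d a b + d b c].

Definition flR (r : R) : R := (Num.floor r)%:~R.
Definition ceR (r : R) : R := (Num.ceil r)%:~R.

Definition fcap (u : nat) (p : nat) (q : R) : R :=
  let pu := p%:R / u%:R in
  if q <= flR pu then q * u%:R
  else if q < ceR pu then
    u%:R * flR pu + u%:R * (pu - flR pu) * (q - flR pu)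
  else p%:R.

Variables (d : Fac + Cli -> Fac + Cli -> R) (x : Fac -> Cli -> R) (y : Fac -> R).

Definition dFC (i : Fac) (j : Cli) : R := d (inl i) (inr j).
Definition dCC (j j' : Cli) : R := d (inr j) (inr j').

Definition dav (j : Cli) : R := \sum_(i : Fac) x i j * dFC i j.
Definition Dfac (i : Fac) : R := \sum_(j : Cli) x i j * dFC i j.
Definition D'fac (i : Fac) : R := \sum_(j : Cli) x i j * dav j.

Definition ysum (B : {set Fac}) : R := \sum_(i in B) y i.
Definition y'sum (u : nat) (B : {set Fac}) : R :=
  (u%:R)^-1 * \sum_(j : Cli) \sum_(i in B) x i j.
Definition xsum (B : {set Fac}) (J : {set Cli}) : R :=
  \sum_(i in B) \sum_(j in J) x i j.
Definition Dsum (B : {set Fac}) : R := \sum_(i in B) Dfac i.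
Definition D'sum (B : {set Fac}) : R := \sum_(i in B) D'fac i.

(* d(X,Y) = min over a in X, b in Y of d(a,b), for client sets; the default
   of the min is the max of all the values (0 if empty), so the result is the
   true minimum whenever the index set is nonempty. *)
Definition setdistCC (X Y : {set Cli}) : R :=
  \big[Num.min/ \big[Num.max/0]_(p : Cli * Cli | (p.1 \in X) && (p.2 \in Y)) dCC p.1 p.2]_
     (p : Cli * Cli | (p.1 \in X) && (p.2 \in Y)) dCC p.1 p.2.

(* The greedy construction of C*: clients still remaining after choosing the
   sequence s (a client j is removed when some chosen v has d(j,v) <= 2 l dav j). *)
Definition remaining (l : nat) (s : seq Cli) : {set Cli} :=
  [set j | all (fun v => 2%:R * l%:R * dav j < dCC j v) s].

Definition greedy_run (l : nat) (s : seq Cli) : Prop :=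
  (forall k, (k < size s)%N ->
     forall v0 : Cli, let v := nth v0 s k in
     v \in remaining l (take k s) /\
     (forall j, j \in remaining l (take k s) -> dav v <= dav j))
  /\ remaining l s = set0.

Definition closest_assignment (Cstar : {set Cli}) (sigma : Fac -> Cli) : Prop :=
  forall i, sigma i \in Cstar /\ (forall v, v \in Cstar -> dFC i (sigma i) <= dFC i v).

Definition Uset (sigma : Fac -> Cli) (v : Cli) : {set Fac} := [set i | sigma i == v].

End Defs.

(* Main.v *)
Require Import Defs.
From mathcomp Require Import all_boot all_order all_algebra.
From mathcomp Require Import ring lra.
Import Order.TTheory GRing.Theory Num.Theory.
Local Open Scope ring_scope.
Lemma floor_props {R : archiRealFieldType} (Y : R) :
  flR Y <= Y /\ Y < flR Y + 1.
Proof. rewrite /flR; have /andP[h1 h2] := floor_itv Y; by rewrite intrD in h2. Qed.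

Lemma fcap_bound (R : archiRealFieldType) (u p : nat) (Y : R) :
  (0 < u)%N ->
  fcap u p Y <= flR Y * u%:R + (p%:R - flR Y * u%:R) * (Y - flR Y).
Proof.
move=> u0; have uR : 0 < u%:R :> R by rewrite ltr0n.
have [fl1 fl2] := floor_props Y.
pose pu : R := p%:R / u%:R.
have hp : u%:R * pu = p%:R by rewrite /pu mulrC divfK // gt_eqF.
rewrite /fcap -/pu.
case: ifP => [c1|c1].
  have : Num.floor Y <= Num.floor pu.
    rewrite floor_ge_int; apply: (le_trans fl1); apply: (le_trans c1); exact: floor_le.
  rewrite le_eqVlt => /orP[/eqP e|lt].
    have eY : Y = flR Y by apply/eqP; rewrite eq_le fl1 andbT /flR e.
    have t0 : Y - flR Y = 0 by lra.
    rewrite t0 mulr0 addr0 ler_pM2r //; lra.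
  have : (Num.floor Y + 1 <= Num.floor pu) by rewrite lezD1.
  rewrite -(ler_int R) intrD -/(flR Y) => h.
  have h2 : flR pu <= pu by rewrite /flR floor_le.
  rewrite -/(flR pu) in h.
  have hq : u%:R * (flR Y + 1) <= p%:R by rewrite -hp ler_wpM2l ?(ltW uR) //; lra.
  nra.
case: ifP => [c2|c2].
  have e : Num.floor pu = Num.floor Y.
    apply/eqP; rewrite eq_le; apply/andP; split.
      by rewrite floor_ge_int ltW // ltNge c1.
    have : Num.ceil pu <= Num.floor pu + 1 by rewrite ceil_floor lerD2l lez_nat leq_b1.
    rewrite -(ler_int R) => hc.
    have : Y < (Num.floor pu + 1)%:~R by apply: lt_le_trans c2 hc.
    by rewrite -floor_lt_int ltzD1.
  rewrite /flR e -/(flR Y) -hp.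
  by rewrite le_eqVlt; apply/orP; left; apply/eqP; ring.
have : Num.ceil pu <= Num.floor Y by rewrite floor_ge_int -/(ceR pu) leNgt c2.
rewrite -(ler_int R) -/(flR Y) => h.
have h2 : pu <= ceR pu by rewrite /ceR ceil_ge.
rewrite -/(ceR pu) in h.
have hq : p%:R <= flR Y * u%:R by rewrite -hp mulrC ler_wpM2r ?(ltW uR) //; lra.
nra.
Qed.

Lemma setdist_bounds {R : archiRealFieldType} {Fac Cli : finType}
  (d : Fac + Cli -> Fac + Cli -> R) (X Y : {set Cli}) :
  (forall a b, 0 <= d a b) ->
  0 <= setdistCC d X Y /\
  (forall v w, v \in X -> w \in Y -> setdistCC d X Y <= dCC d v w).
Proof.
move=> d0; split.
  rewrite /setdistCC; apply: (big_ind (fun z => 0 <= z)).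
  - apply: (big_ind (fun z => 0 <= z)) => //.
      by move=> a b ha hb; rewrite le_max ha.
    by move=> p _; apply: d0.
  - by move=> a b ha hb; rewrite le_min ha hb.
  - by move=> p _; apply: d0.
move=> v w hv hw; rewrite /setdistCC.
by apply: (bigmin_le_cond _ (j := (v, w)) (P := fun p : Cli * Cli => (p.1 \in X) && (p.2 \in Y))) => /=; rewrite hv hw.
Qed.

Theorem lemma2 (R : archiRealFieldType) (Fac Cli : finType)
  (d : Fac + Cli -> Fac + Cli -> R) (x : Fac -> Cli -> R) (y : Fac -> R)
  (k u l : nat) :
  is_metric d ->
  (0 < k)%N -> (0 < u)%N -> (0 < l)%N ->
  (forall i j, 0 <= x i j) -> (forall i, 0 <= y i) ->
  (forall j, \sum_(i : Fac) x i j = 1) ->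
  \sum_(i : Fac) y i <= k%:R ->
  (forall i j, x i j <= y i) ->
  (forall i, \sum_(j : Cli) x i j <= u%:R * y i) ->
  forall (s : seq Cli) (sigma : Fac -> Cli) (A : {set Cli}),
  greedy_run d x l s ->
  let Cstar := [set v | v \in s] in
  closest_assignment d Cstar sigma ->
  A != set0 -> A \proper Cstar ->
  let S := \bigcup_(v in A) Uset sigma v in
  y'sum x u S >= flR (ysum y S) ->
  (forall J : {set Cli}, xsum x S J <= fcap u #|J| (ysum y S)) ->
  (y'sum x u S - flR (y'sum x u S)) * (ceR (ysum y S) - ysum y S)
    * setdistCC d A (Cstar :\: A)
  <= 4%:R / u%:R * Dsum d x S + (4 * l + 2)%:R / u%:R * D'sum d x S.
Proof.
move=> md k0 u0 l0 x0 y0 x1 _ _ xu s sigma A hg Cstar hcl _ _ S hy' hJ.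
have [d0 _ dsym dtri] := md.
have [_ hrem] := hg.
have uR : 0 < u%:R :> R by rewrite ltr0n.
have inS i : (i \in S) = (sigma i \in A).
  apply/bigcupP/idP => [[v vA]|sA]; first by rewrite /Uset inE => /eqP ->.
  by exists (sigma i) => //; rewrite /Uset inE.
pose a j := \sum_(i in S) x i j.
have a0 j : 0 <= a j by apply: sumr_ge0.
have a1 j : 1 - a j = \sum_(i in ~: S) x i j.
  rewrite -(x1 j) (bigID (fun i => i \in S)) /= addrC addrK.
  by apply: eq_bigl => i; rewrite inE.
have a_le1 j : a j <= 1 by rewrite -subr_ge0 a1; apply: sumr_ge0.
have dav0 j : 0 <= dav d x j by rewrite /dav; apply: sumr_ge0 => i _; apply: mulr_ge0; [exact: x0 | exact: d0].
set Dist := setdistCC d A (Cstar :\: A).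
have [Dist0 DistP] := setdist_bounds d A (Cstar :\: A) d0.
have hrem' j : exists2 v, v \in Cstar & dCC d j v <= 2%:R * l%:R * dav d x j.
  have : j \notin remaining d x l s by rewrite hrem inE.
  rewrite inE => /allPn [v vs hv]; exists v; first by rewrite inE.
  by rewrite leNgt.
have geo i j v : v \in Cstar -> dCC d j v <= 2%:R * l%:R * dav d x j ->
   dCC d (sigma i) v <= 2%:R * dFC d i j + 4%:R * l%:R * dav d x j.
  move=> vC hv; have [_ hc] := hcl i.
  have h1 := dtri (inr (sigma i)) (inl i) (inr v).
  have h2 := hc v vC.
  have h3 := dtri (inl i) (inr j) (inr v).
  have h4 : d (inr (sigma i)) (inl i) = dFC d i (sigma i) by rewrite /dFC dsym.
  rewrite h4 in h1; rewrite /dCC /dFC in h1 h2 h3 hv *; lra.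
have client j : Dist * (a j * (1 - a j)) <=
   2%:R * (\sum_(i in S) x i j * dFC d i j) + (4 * l + 2)%:R * (a j * dav d x j).
  have [v vC hv] := hrem' j.
  have sumb (P : pred Fac) :
      (forall i, P i -> Dist <= 2%:R * dFC d i j + 4%:R * l%:R * dav d x j) ->
      Dist * \sum_(i | P i) x i j <= 2%:R * (\sum_(i | P i) x i j * dFC d i j)
         + 4%:R * l%:R * dav d x j * \sum_(i | P i) x i j.
    move=> hP; rewrite [Dist * _]mulr_sumr [2%:R * _]mulr_sumr [4%:R * l%:R * dav d x j * _]mulr_sumr -big_split /=; apply: ler_sum => i Pi.
    have := hP i Pi; have := x0 i j; nra.
  have dsplit : dav d x j = \sum_(i in S) x i j * dFC d i j
                          + \sum_(i in ~: S) x i j * dFC d i j.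
    rewrite /dav (bigID (fun i => i \in S)) /=; congr (_ + _).
    by apply: eq_bigl => i; rewrite inE.
  have s1 : 0 <= \sum_(i in S) x i j * dFC d i j.
    by apply: sumr_ge0 => i _; apply: mulr_ge0; [exact: x0 | exact: d0].
  have s2 : 0 <= \sum_(i in ~: S) x i j * dFC d i j.
    by apply: sumr_ge0 => i _; apply: mulr_ge0; [exact: x0 | exact: d0].
  have ha0 := a0 j; have ha1 := a_le1 j; have hd := dav0 j.
  have cE : (4 * l + 2)%:R = 4%:R * l%:R + 2%:R :> R by rewrite natrD natrM.
  rewrite cE.
  have Ld : 0 <= l%:R * dav d x j by apply: mulr_ge0.
  case: (boolP (v \in A)) => vA.
    have hb := sumb (fun i => i \in ~: S).
    rewrite /= -a1 in hb.
    have hb' : Dist * (1 - a j) <= 2%:R * (\sum_(i in ~: S) x i j * dFC d i j)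
         + 4%:R * l%:R * dav d x j * (1 - a j).
      apply: hb => i; rewrite inE inS => siA.
      have [sC _] := hcl i.
      apply: (le_trans (DistP v (sigma i) vA _)); first by rewrite inE siA sC.
      by rewrite /dCC dsym; apply: geo.
    have e1 : Dist * (a j * (1 - a j)) = a j * (Dist * (1 - a j)) by ring.
    rewrite e1.
    apply: (le_trans (ler_wpM2l ha0 hb')).
    have : 4%:R * l%:R * dav d x j * (1 - a j) <= 4%:R * (l%:R * dav d x j) by nra.
    nra.
  have hb := sumb (fun i => i \in S).
  rewrite /= -/(a j) in hb.
  have hb' : Dist * a j <= 2%:R * (\sum_(i in S) x i j * dFC d i j)
       + 4%:R * l%:R * dav d x j * a j.
    apply: hb => i; rewrite inS => siA.
    apply: (le_trans (DistP (sigma i) v siA _)); first by rewrite inE vA vC.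
    exact: geo.
  have e1 : Dist * (a j * (1 - a j)) = (1 - a j) * (Dist * a j) by ring.
  rewrite e1.
  have h1a : 0 <= 1 - a j by lra.
  apply: (le_trans (ler_wpM2l h1a hb')).
  nra.
set Y := ysum y S.
set yp := y'sum x u S.
have [fl1 fl2] := floor_props Y.
set n := flR Y in fl1 fl2 hy' *.
pose th := Y - n.
pose T := \sum_j a j.
have hT : u%:R * yp = T.
  by rewrite /yp /y'sum mulrA mulfV ?mul1r // gt_eqF.
pose J := [set j | th < a j].
have xJ : xsum x S J = \sum_(j in J) a j by rewrite /xsum exchange_big.
have sq : \sum_j a j ^+ 2 <= th * T + n * u%:R * (1 - th).
  have step : \sum_j a j ^+ 2 <= \sum_j (th * a j + (if j \in J then a j - th else 0)).
    apply: ler_sum => j _; have ha0 := a0 j; have ha1 := a_le1 j.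
    case: ifP; rewrite inE => h.
      rewrite expr2; nra.
    rewrite expr2 addr0; move: h => /negbT; rewrite -leNgt => h; nra.
  rewrite big_split /= -mulr_sumr -big_mkcond /= sumrB sumr_const -xJ in step.
  have h1 := hJ J; have h2 := fcap_bound R u #|J| Y u0.
  rewrite -/n -/Y in h2.
  rewrite -mulr_natr in step.
  rewrite -/Y in h1; rewrite -/T /th in step; rewrite /th; lra.
have F1 : n <= flR yp by rewrite /n /flR ler_int floor_ge_int; exact: hy'.
have [F2 _] := floor_props yp.
have C1 : ceR Y <= n + 1.
  have : Num.ceil Y <= Num.floor Y + 1 by rewrite ceil_floor lerD2l lez_nat leq_b1.
  by rewrite -(ler_int R) intrD.
have C2 : Y <= ceR Y by rewrite /ceR ceil_ge.
have sumaa : \sum_j Dist * (a j * (1 - a j)) = Dist * (T - \sum_j a j ^+ 2).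
  rewrite -mulr_sumr; congr (_ * _); rewrite /T -sumrB; apply: eq_bigr => j _; ring.
have hsum : \sum_j (2%:R * (\sum_(i in S) x i j * dFC d i j) + (4 * l + 2)%:R * (a j * dav d x j))
    = 2%:R * Dsum d x S + (4 * l + 2)%:R * D'sum d x S.
  rewrite big_split /= -mulr_sumr -mulr_sumr; congr (_ * _ + _ * _).
    by rewrite /Dsum /Dfac exchange_big.
  rewrite /D'sum /D'fac exchange_big; apply: eq_bigr => j _.
  by rewrite /a mulr_suml.
have key : Dist * (T - \sum_j a j ^+ 2) <= 2%:R * Dsum d x S + (4 * l + 2)%:R * D'sum d x S.
  by rewrite -sumaa -hsum; apply: ler_sum => j _; apply: client.
have G3 : (yp - flR yp) * (ceR Y - Y) <= (yp - n) * (n + 1 - Y).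
  apply: ler_pM; lra.
have G4 : u%:R * ((yp - n) * (n + 1 - Y)) <= T - \sum_j a j ^+ 2.
  rewrite -hT /th in sq *; lra.
have Ds0 : 0 <= Dsum d x S.
  apply: sumr_ge0 => i _; apply: sumr_ge0 => j _; apply: mulr_ge0; [exact: x0 | exact: d0].
set Ds := Dsum d x S in key Ds0 *.
set D's := D'sum d x S in key *.
set c := (4 * l + 2)%:R in key *.
have H1 : (yp - flR yp) * (ceR Y - Y) * Dist <= (yp - n) * (n + 1 - Y) * Dist.
  by apply: ler_wpM2r.
have H2 : (yp - n) * (n + 1 - Y) * Dist * u%:R <= 2%:R * Ds + c * D's.
  apply: le_trans key.
  rewrite mulrC mulrA [Dist * _]mulrC; by apply: ler_wpM2r.
have H3 : (yp - n) * (n + 1 - Y) * Dist <= (2%:R * Ds + c * D's) / u%:R.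
  by rewrite ler_pdivlMr.
apply: (le_trans H1); apply: (le_trans H3).
rewrite mulrAC [c / _ * _]mulrAC -mulrDl ler_pM2r ?invr_gt0 //; lra.
Qed.
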